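(* Let $f\colon I\to I$ be continuous and $k\ge1$, and assume $\mathrm{Per}(f,k)$ is a Cantor set. Fix $x\in\mathrm{Per}(f,k)$ and $\varepsilon>0$, and let $\mu_x$ be the unique $f$-invariant Borel probability measure supported on the orbit of $x$. Then there is a non-atomic Borel probability measure $\nu$ supported on $\mathrm{Per}(f,k)$ such that $D(\mu_x,\nu)<\varepsilon$.
   Context: $I=[0,1]$. $\mathrm{Per}(f,k)=\{x: f^k(x)=x,\ f^i(x)\ne x,\ 1\le i<k\}$. For $A\subset I$, $B(A,\varepsilon)=\{y\in I: |y-a|<\varepsilon \text{ for some } a\in A\}$. The Prohorov metric on Borel probability measures on $I$ is $D(\mu,\nu)=\inf\{\varepsilon>0: \mu(A)\le\nu(B(A,\varepsilon))+\varepsilon \text{ and } \nu(A)\le\mu(B(A,\varepsilon))+\varepsilon \text{ for all Borel } A\subset I\}$. A Cantor set is a nonempty compact, perfect, totally disconnected set. *)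

(* Defs.v *)
From HB Require Import structures.
From mathcomp Require Import all_boot all_order all_algebra.
From mathcomp Require Import all_classical all_reals all_analysis.
Set Implicit Arguments. Unset Strict Implicit. Unset Printing Implicit Defensive.
Import Order.TTheory GRing.Theory Num.Theory.
Import numFieldNormedType.Exports.
Local Open Scope classical_set_scope.
Local Open Scope ring_scope.

(* I = [0,1] is the set `[0, 1] of R.  Borel probability measures on I are
   represented as probability measures on (the Borel sigma-algebra of) R
   whose support lies in I. *)

Definition unitI {R : realType} : set R := `[0, 1]%classic.

Definition Per {R : realType} (f : R -> R) (k : nat) : set R :=
  [set x | unitI x /\ iter k f x = x /\
           (forall i : nat, (1 <= i)%N -> (i < k)%N -> iter i f x <> x)].

Definition cantor_set {R : realType} (C : set R) : Prop :=
  [/\ C !=set0, compact C, perfect_set C & totally_disconnected C].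

Definition orbit_of {R : realType} (f : R -> R) (x : R) : set R :=
  [set iter i f x | i in [set: nat]].

Definition msupport {R : realType} (mu : set R -> \bar R) : set R :=
  [set y | forall e : R, 0 < e -> (0 < mu (ball y e))%E].

Definition f_invariant {R : realType} (f : R -> R) (mu : set R -> \bar R) :=
  forall A : set R, measurable A -> A `<=` unitI ->
    mu (unitI `&` f @^-1` A) = mu A.

Definition nonatomic {R : realType} (mu : set R -> \bar R) :=
  forall y : R, mu [set y] = 0%E.

Definition Bnbhd {R : realType} (A : set R) (e : R) : set R :=
  [set y | unitI y /\ exists2 a, A a & `|y - a| < e].

Definition prohorov_ok {R : realType} (mu nu : set R -> \bar R) (e : R) :=
  forall A : set R, measurable A -> A `<=` unitI ->
    (mu A <= nu (Bnbhd A e) + e%:E)%E /\ (nu A <= mu (Bnbhd A e) + e%:E)%E.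

Definition prohorov {R : realType} (mu nu : set R -> \bar R) : \bar R :=
  ereal_inf [set e%:E | e in [set e : R | 0 < e /\ prohorov_ok mu nu e]].

(* Main.v *)
Require Import Defs.
From HB Require Import structures.
From mathcomp Require Import all_boot all_order all_algebra.
From mathcomp Require Import all_classical all_reals all_analysis.
From mathcomp Require Import ring lra zify.
Import Order.TTheory GRing.Theory Num.Theory.
Import numFieldNormedType.Exports.
Local Open Scope classical_set_scope.
Local Open Scope ring_scope.
Section Tree.
Variables (R : realType) (C : set R) (c0 r0 : R).

Definition pickc (c r : R) : R :=
  xget c [set c' | C c' /\ c' != c /\ `|c' - c| < r / 2].

Definition child (b : bool) (p : R * R) : R * R :=
  let c' := pickc p.1 p.2 in
  let lo := if p.1 <= c' then p.1 else c' in
  let hi := if p.1 <= c' then c' else p.1 in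
  (if b then hi else lo, (hi - lo) / 3).

Fixpoint tree (n m : nat) : R * R :=
  if n is n'.+1 then child (odd m) (tree n' m./2) else (c0, r0).

Definition lo n m := (tree n m).1 - (tree n m).2.
Definition hi n m := (tree n m).1 + (tree n m).2.

Hypothesis hC : forall c, C c -> forall e, 0 < e -> exists c', C c' /\ c' != c /\ `|c' - c| < e.
Hypotheses (Cc0 : C c0) (r0pos : 0 < r0).

Lemma child_props p b : C p.1 -> 0 < p.2 ->
  [/\ C (child b p).1, 0 < (child b p).2, (child b p).2 <= p.2 / 2,
      p.1 - p.2 < (child b p).1 - (child b p).2 &
      (child b p).1 + (child b p).2 < p.1 + p.2].
Proof.
case: p => c r /= Cc rp.
have [Cc' [nc' lc']] : C (pickc c r) /\ pickc c r != c /\ `|pickc c r - c| < r / 2.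
  have ex : exists c', C c' /\ c' != c /\ `|c' - c| < r / 2.
    by apply: hC => //; rewrite divr_gt0.
  exact: (xgetPex c ex).
rewrite /child /=.
move: Cc' nc' lc'; set c' := pickc c r => Cc' nc' lc'.
move: lc'; rewrite ltr_norml => /andP[h1 h2].
case: (leP c c') => hcc'.
  have hlt : c < c' by rewrite lt_neqAle eq_sym nc'.
  by case: b; split => //; lra.
by case: b; split => //; lra.
Qed.

Lemma treeS n m : tree n.+1 m = child (odd m) (tree n m./2).
Proof. by []. Qed.

Lemma tree_inv n m : C (tree n m).1 /\ 0 < (tree n m).2.
Proof.
elim: n m => [|n IH] m /=; first by [].
have [h1 h2] := IH m./2.
by have [] := child_props _ (odd m) h1 h2.
Qed.

Lemma tree_rad n m : (tree n m).2 <= r0 / 2 ^+ n.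
Proof.
elim: n m => [|n IH] m /=; first by rewrite expr0 divr1.
have [h1 h2] := tree_inv n m./2.
have [_ _ h _ _] := child_props _ (odd m) h1 h2.
apply: (le_trans h); have := IH m./2.
have hp : 0 < 2 ^+ n :> R by rewrite exprn_gt0.
set a := (tree n m./2).2 => hi.
have -> : r0 / 2 ^+ n.+1 = (r0 / 2 ^+ n) / 2.
  by rewrite exprS; field; rewrite gt_eqF.
lra.
Qed.

Lemma lo_lt_hi n m : lo n m < hi n m.
Proof. have [_ h] := tree_inv n m; rewrite /lo /hi; lra. Qed.

Lemma nest n m : lo n m./2 < lo n.+1 m /\ hi n.+1 m < hi n m./2.
Proof.
have [h1 h2] := tree_inv n m./2.
have [_ _ _ a b] := child_props _ (odd m) h1 h2.
by rewrite /lo /hi treeS; split.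
Qed.

Lemma sep n m m' : (m < m')%N -> (m' < 2 ^ n)%N -> hi n m < lo n m'.
Proof.
elim: n m m' => [|n IH] m m'; first by rewrite expn0; lia.
move=> mm' m'n.
have h2 : (m./2 <= m'./2)%N by rewrite -!divn2 leq_div2r // ltnW.
have h3 : (m'./2 < 2 ^ n)%N by rewrite -divn2 ltn_divLR // -expnSr.
case: (ltngtP m./2 m'./2) h2 => // [lt|eq] _.
  have := IH _ _ lt h3.
  have [_ a] := nest n m; have [b _] := nest n m'.
  lra.
have om : ~~ odd m /\ odd m'.
  have := odd_double_half m; have := odd_double_half m'; rewrite -eq -!muln2.
  by move: mm'; case: (odd m); case: (odd m') => /=; lia.
have [h1 h2'] := tree_inv n m./2.
rewrite /hi /lo !treeS -eq; case: om => /negbTE -> ->.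
rewrite /child /=.
set c := (tree n m./2).1; set r := (tree n m./2).2.
have [_ [nc _]] : C (pickc c r) /\ pickc c r != c /\ `|pickc c r - c| < r / 2.
  have ex : exists c', C c' /\ c' != c /\ `|c' - c| < r / 2.
    by apply: hC => //; rewrite divr_gt0.
  exact: (xgetPex c ex).
move: nc; set c' := pickc c r => nc.
case: (leP c c') => hcc'.
  have hlt : c < c' by rewrite lt_neqAle eq_sym nc.
  lra.
lra.
Qed.

Definition clamp (t : R) : R := if t <= 0 then 0 else if t <= 1 then t else 1.
Definition idx (n : nat) (t : R) : nat :=
  minn (Num.truncn (clamp t * 2 ^+ n)) (2 ^ n).-1.

Lemma clamp01 t : 0 <= clamp t <= 1.
Proof. rewrite /clamp; case: (leP t 0) => h; first by apply/andP; split; timeout 15 lra.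
case: (leP t 1) => h'; apply/andP; split; timeout 15 lra. Qed.

Lemma clamp_id t : 0 <= t <= 1 -> clamp t = t.
Proof. move=> /andP[h1 h2]; rewrite /clamp; case: (leP t 0) => h; [timeout 15 lra|by rewrite h2]. Qed.

Lemma clamp_mono t t' : t <= t' -> clamp t <= clamp t'.
Proof.
move=> h; rewrite /clamp.
case: (leP t 0) => h1; case: (leP t' 0) => h2; try case: (leP t 1) => h3;
  try case: (leP t' 1) => h4; timeout 15 lra.
Qed.

Lemma trunc2 (y : R) : 0 <= y -> (Num.truncn (y * 2))./2 = Num.truncn y.
Proof.
move=> y0.
have [ha1 ha2] : ((Num.truncn y)%:R <= y) /\ (y < (Num.truncn y).+1%:R).
  by have /andP[] := trunc_itv y0.
have y20 : 0 <= y * 2 by timeout 15 lra.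
have h1 : ((Num.truncn y * 2) <= Num.truncn (y * 2))%N.
  by rewrite truncn_ge_nat // natrM; timeout 15 lra.
have h2 : (Num.truncn (y * 2) < Num.truncn y * 2 + 2)%N.
  by rewrite truncn_lt_nat // natrD natrM; move: ha2; rewrite -addn1 natrD; timeout 15 lra.
rewrite -divn2; timeout 15 lia.
Qed.

Lemma idx_lt n t : (idx n t < 2 ^ n)%N.
Proof. rewrite /idx; have := expn_gt0 2 n; timeout 15 lia. Qed.

Lemma idxS n t : (idx n.+1 t)./2 = idx n t.
Proof.
rewrite /idx exprSr mulrA.
have y0 : 0 <= clamp t * 2 ^+ n.
  by have /andP[h _] := clamp01 t; rewrite mulr_ge0 // exprn_ge0.
have := trunc2 _ y0; rewrite expnSr.
have : (0 < 2 ^ n)%N by rewrite expn_gt0.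
set P := (2 ^ n)%N; set b := Num.truncn _; set a := Num.truncn _.
rewrite -!divn2 => hP hba.
timeout 30 lia.
Qed.

Lemma idx_mono n t t' : t <= t' -> (idx n t <= idx n t')%N.
Proof.
move=> h; rewrite /idx.
have : (Num.truncn (clamp t * 2 ^+ n) <= Num.truncn (clamp t' * 2 ^+ n))%N.
  apply: le_truncn; apply: ler_wpM2r; first by rewrite exprn_ge0.
  exact: clamp_mono.
timeout 15 lia.
Qed.

Lemma idx_sep t t' : 0 <= t -> t < t' -> t' <= 1 -> exists n, (idx n t < idx n t')%N.
Proof.
move=> h0 htt' h1.
pose n := Num.truncn ((t' - t)^-1).
have dpos : 0 < t' - t by timeout 15 lra.
have hn : (t' - t)^-1 < n.+1%:R by rewrite /n; apply: truncnS_gt.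
have h2n : n.+1%:R <= 2 ^+ n :> R by rewrite -natrX ler_nat; exact: ltn_expl.
have key : 1 < (t' - t) * 2 ^+ n.
  have := lt_le_trans hn h2n => h.
  by rewrite -(ltr_pdivrMl _ _ dpos) mulr1.
exists n; rewrite /idx !clamp_id; first last.
- by apply/andP; split; timeout 15 lra.
- by apply/andP; split; timeout 15 lra.
have p0 : 0 < 2 ^+ n :> R by rewrite exprn_gt0.
set a := Num.truncn (t * 2 ^+ n); set a' := Num.truncn (t' * 2 ^+ n).
have [ha1 ha2] : (a%:R <= t * 2 ^+ n) /\ (t * 2 ^+ n < a.+1%:R).
  by have /andP[] := trunc_itv (mulr_ge0 h0 (ltW p0)).
have [hb1 hb2] : (a'%:R <= t' * 2 ^+ n) /\ (t' * 2 ^+ n < a'.+1%:R).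
  have h0' : 0 <= t' by timeout 15 lra.
  by have /andP[] := trunc_itv (mulr_ge0 h0' (ltW p0)).
have P1 : 1 <= 2 ^+ n :> R by rewrite -natrX ler1n expn_gt0.
have key' : t * 2 ^+ n + 1 < t' * 2 ^+ n by move: key; rewrite mulrBl; lra.
have e1 : (a < a')%N.
  rewrite -(ltr_nat R); move: hb2; rewrite -addn1 natrD; timeout 15 lra.
have e2 : (a < (2 ^ n).-1)%N.
  have : (a.+1 < 2 ^ n)%N.
    rewrite -(ltr_nat R) natrX -addn1 natrD.
    have : t' * 2 ^+ n <= 2 ^+ n by rewrite ler_piMl // ltW.
    timeout 15 lra.
  by rewrite ltn_predRL.
by rewrite (minn_idPl (ltnW e2)) leq_min e1.
Qed.

Definition gA t n := lo n (idx n t).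
Definition gB t n := hi n (idx n t).
Definition gmap (t : R) : R := sup (range (gA t)).

Lemma chain t n N : (n <= N)%N -> gA t n <= gA t N /\ gB t N <= gB t n.
Proof.
elim: N => [|N IH]; first by rewrite leqn0 => /eqP ->; split.
rewrite leq_eqVlt => /orP[/eqP->|]; first by split.
rewrite ltnS => /IH [h1 h2].
have [a b] := nest N (idx N.+1 t).
rewrite idxS in a b.
rewrite /gA /gB in h1 h2 *; split; lra.
Qed.

Lemma AleB t N n : gA t N <= gB t n.
Proof.
have hlt m : gA t m <= gB t m by apply: ltW; exact: lo_lt_hi.
case: (leqP n N) => h.
  have [_ h2] := chain t _ _ h; have := hlt N; lra.
have [h1 _] := chain t _ _ (ltnW h); have := hlt n; lra.
Qed.

Lemma mono_lo n m m' : (m <= m')%N -> (m' < 2 ^ n)%N -> lo n m <= lo n m'.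
Proof.
rewrite leq_eqVlt => /orP[/eqP->|lt] // h.
have := sep _ _ _ lt h; have := lo_lt_hi n m; lra.
Qed.

Lemma gmap_ub t : has_ubound (range (gA t)).
Proof. by exists (gB t 0%N) => _ [n _ <-]; exact: AleB. Qed.

Lemma gmap_ge t n : gA t n <= gmap t.
Proof. by apply: (ub_le_sup (gmap_ub t)); exists n. Qed.

Lemma gmap_le t n : gmap t <= gB t n.
Proof. by apply: ge_sup; [exists (gA t 0%N), 0%N | move=> _ [N _ <-]; exact: AleB]. Qed.

Lemma gmap_mono t t' : t <= t' -> gmap t <= gmap t'.
Proof.
move=> h; apply: ge_sup; first by exists (gA t 0%N), 0%N.
move=> _ [n _ <-]; apply: le_trans (gmap_ge t' n).
by apply: mono_lo; [exact: idx_mono | exact: idx_lt].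
Qed.

Lemma gmap_strict t t' : 0 <= t -> t < t' -> t' <= 1 -> gmap t < gmap t'.
Proof.
move=> h0 h h1; have [n hn] := idx_sep _ _ h0 h h1.
have := sep _ _ _ hn (idx_lt n t').
have := gmap_le t n; have := gmap_ge t' n; rewrite /gA /gB; lra.
Qed.

Lemma gmap_near t : `|gmap t - c0| <= r0.
Proof.
have := gmap_le t 0; have := gmap_ge t 0; rewrite /gA /gB /lo /hi /= => h1 h2.
rewrite ler_norml; apply/andP; split; lra.
Qed.

Lemma gmap_C t : closed C -> C (gmap t).
Proof.
move=> /closure_id ->.
move=> U /nbhs_ballP [e /= e0 sub].
pose n := Num.truncn (r0 / e).
have hn : r0 / e < n.+1%:R by apply: truncnS_gt.
have h2n : n.+1%:R <= 2 ^+ n :> R by rewrite -natrX ler_nat; exact: ltn_expl.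
have p0 : 0 < 2 ^+ n :> R by rewrite exprn_gt0.
have small : r0 / 2 ^+ n < e.
  have h := lt_le_trans hn h2n.
  rewrite ltr_pdivrMr // in h.
  by rewrite ltr_pdivrMr // mulrC.
have [Cc _] := tree_inv n (idx n t).
exists (tree n (idx n t)).1; split => //; apply: sub.
rewrite -ball_normE /ball_ /=.
have := tree_rad n (idx n t).
have := gmap_le t n; have := gmap_ge t n; rewrite /gA /gB /lo /hi => h1 h2 h3.
rewrite ltr_norml; apply/andP; split; lra.
Qed.

End Tree.

Section Meas.
Variable R : realType.
Definition lam01 : {measure set (measurableTypeR R) -> \bar R} := mrestr (@lebesgue_measure R) (measurable_itv `[0%R, 1%R]).

Section Push.
Variables (g : measurableTypeR R -> R).
Definition mpushf (mg : measurable_fun setT g) : set R -> \bar R := pushforward lam01 g.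
Variable (mg : measurable_fun setT g).
Local Notation mpush := (mpushf mg).
Let mpush0 : mpush set0 = 0%E.
Proof. by rewrite /mpushf /pushforward preimage_set0 measure0. Qed.
Let mpush_ge0 A : (0 <= mpush A)%E.
Proof. by apply: measure_ge0. Qed.
Let mpush_sa : semi_sigma_additive mpush.
Proof.
move=> F mF tF mUF; rewrite /mpushf /pushforward preimage_bigcup.
apply: measure_semi_sigma_additive.
- by move=> n; rewrite -[X in measurable X]setTI; exact: mg.
- apply/trivIsetP => /= i j _ _ ij; rewrite -preimage_setI.
  by move/trivIsetP : tF => /(_ _ _ _ _ ij) ->//; rewrite preimage_set0.
- by rewrite -preimage_bigcup -[X in measurable X]setTI; exact: mg.
Qed.
HB.instance Definition _ := isMeasure.Build _ _ _ mpush mpush0 mpush_ge0 mpush_sa.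

Lemma lam01T : lam01 setT = 1%E.
Proof.
rewrite /lam01 /= /mrestr setTI.
by rewrite lebesgue_measure_itv /= lte_fin ltr01 oppr0 adde0.
Qed.

Lemma mpush_all (B : set R) : (forall t, B (g t)) -> mpush B = 1%E.
Proof.
move=> h; rewrite /mpushf /pushforward.
have -> : g @^-1` B = setT by apply/seteqP; split => // t _; exact: h.
exact: lam01T.
Qed.

Lemma mpush_none (B : set R) : (forall t, ~ B (g t)) -> mpush B = 0%E.
Proof.
move=> h; rewrite /mpushf /pushforward.
have -> : g @^-1` B = set0 by apply/seteqP; split => // t /h.
exact: measure0.
Qed.

Lemma mpush_le1 (B : set R) : measurable B -> (mpush B <= 1)%E.
Proof.
move=> mB; rewrite -(mpush_all setT) //.
apply: le_measure => //; rewrite inE //.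
Qed.

Lemma mpush_set1 (y : R) :
  (forall t t', 0 <= t <= 1 -> 0 <= t' <= 1 -> g t = g t' -> t = t') ->
  mpush [set y] = 0%E.
Proof.
move=> ginj; rewrite /mpushf /pushforward /lam01 /= /mrestr.
have mS : measurable (g @^-1` [set y] `&` `[0, 1]).
  by apply: measurableI => //; rewrite -[X in measurable X]setTI; exact: mg.
have [[t0 [gt0 t01]]|] := pselect (exists t, (g @^-1` [set y] `&` `[0%R, 1%R]) t).
  apply/eqP; rewrite eq_le measure_ge0 andbT.
  rewrite -(lebesgue_measure_set1 t0).
  apply: le_measure; rewrite ?inE //.
  move=> t [gt t1]; apply: ginj.
  - by move: t1; rewrite /= in_itv.
  - by move: t01; rewrite /= in_itv.
  - by rewrite gt gt0.
move=> nex; have -> : g @^-1` [set y] `&` `[0%R, 1%R] = set0.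
  by apply/seteqP; split => // t ht; apply: nex; exists t.
exact: measure0.
Qed.
End Push.
Definition nu0 (k : nat) (g : nat -> measurableTypeR R -> R) (mg : forall j, measurable_fun setT (g j))
  (w : nat -> {nonneg R}) := msum (fun j => mscale (w j) (@mpushf (g j) (mg j))) k.
Definition nuP k g mg w (P : probability R R) := mnormalize (@nu0 k g mg w) P.

Lemma mg_test (g : R -> R) : {homo g : x y / x <= y} -> measurable_fun (setT : set (measurableTypeR R)) (g : measurableTypeR R -> R).
Proof. move=> h; exact: (measurable_realfun.nondecreasing_measurable measurableT h). Qed.
End Meas.

Section Conc.
Variable R : realType.

Definition rball (p : int * nat) : set R :=
  ball ((p.1)%:~R / (p.2).+1%:R : R) ((p.2).+1%:R^-1 : R).

Lemma conc (mu : probability R R) (O : set R) : msupport mu `<=` O ->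
  forall S, measurable S -> S `<=` ~` O -> mu S = 0%E.
Proof.
move=> supp S mS SO.
pose F (n : nat) : set R :=
  if @unpickle (int * nat)%type n is Some p then
    (if mu (rball p) == 0%E then rball p else set0) else set0.
have mF n : measurable (F n).
  rewrite /F; case: unpickle => [p|] //.
  by case: ifP => _ //; exact: measurable_realfun.measurable_ball.
have F0 n : mu (F n) = 0%E.
  rewrite /F; case: unpickle => [p|]; last exact: measure0.
  by case: ifP => [/eqP//|_]; exact: measure0.
have cov : S `<=` \bigcup_n F n.
  move=> y Sy.
  have nsup : ~ msupport mu y by move=> /supp Oy; exact: (SO y Sy).
  have [e [e0 he]] : exists e, 0 < e /\ mu (ball y e) = 0%E.
    apply: contrapT => hne; apply: nsup => e e0.
    rewrite lt0e measure_ge0 andbT; apply/negP => /eqP h.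
    by apply: hne; exists e.
  pose m := Num.truncn (2 / e).
  have hm : 2 / e < m.+1%:R by apply: truncnS_gt.
  have mpos : 0 < m.+1%:R :> R by rewrite ltr0n.
  set r := (m.+1%:R : R)^-1.
  have r0 : 0 < r by rewrite invr_gt0.
  have r2 : 2 * r < e.
    rewrite /r ltr_pdivrMr // mulrC.
    by rewrite ltr_pdivrMr // in hm.
  pose z := Num.floor (y * m.+1%:R).
  have [z1 z2] : z%:~R <= y * m.+1%:R /\ y * m.+1%:R < z%:~R + 1.
    by have /andP[a b] := floor_itv (y * m.+1%:R); split => //; rewrite intrD in b.
  have yc : `|y - z%:~R / m.+1%:R| < r.
    have : z%:~R / m.+1%:R <= y /\ y < z%:~R / m.+1%:R + r.
      rewrite /r; split.
        by rewrite ler_pdivrMr.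
      have -> : z%:~R / m.+1%:R + (m.+1%:R)^-1 = (z%:~R + 1) / m.+1%:R :> R.
        by rewrite mulrDl mul1r.
      by rewrite ltr_pdivlMr.
    case; clearbody r; move: (z%:~R / m.+1%:R) => c a b; rewrite ger0_norm; lra.
  have sub : rball (z, m) `<=` ball y e.
    move=> u; rewrite /rball /= -!ball_normE /ball_ /= -/r => hu.
    have := ler_distD (z%:~R / m.+1%:R) y u.
    rewrite (distrC y); lra.
  have mz : mu (rball (z, m)) = 0%E.
    apply/eqP; rewrite eq_le measure_ge0 andbT -he.
    apply: le_measure => //; rewrite inE; exact: measurable_realfun.measurable_ball.
  exists (pickle (z, m)) => //.
  rewrite /F pickleK mz eqxx.
  by rewrite /rball /= -ball_normE /ball_ /= distrC.
apply/eqP; rewrite eq_le measure_ge0 andbT.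
apply: le_trans (measure_sigma_subadditive mu mF mS cov) _.
rewrite eseries0 // => i _ _; exact: F0.
Qed.
End Conc.



Section Orbit.
Variables (R : realType) (f : R -> R) (k : nat) (x : R).
Hypotheses (hI : forall y, unitI y -> unitI (f y)) (k1 : (1 <= k)%N) (Px : Per f k x).

Lemma iter_kmul q : iter (q * k) f x = x.
Proof.
elim: q => [|q IH] //=.
by rewrite mulSn iterD IH; case: Px => _ [].
Qed.

Lemma iter_mod n : iter n f x = iter (n %% k) f x.
Proof. by rewrite {1}(divn_eq n k) addnC iterD iter_kmul. Qed.

Lemma iter_unitI j : unitI (iter j f x).
Proof. elim: j => [|j IH] /=; [by case: Px | exact: hI]. Qed.

Lemma Per_iter j : Per f k (iter j f x).
Proof.
split; first exact: iter_unitI.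
split.
  by rewrite -iterD addnC iterD; case: Px => _ [->].
move=> i i1 ik h.
case: Px => _ [_ per]; apply: (per i i1 ik).
have e : iter ((k.-1 * j) + j) f x = x.
  by rewrite -mulSnr prednK ?(leq_trans _ k1) // mulnC iter_kmul.
by rewrite -{1}e iterD -iterD addnC iterD h -iterD e.
Qed.

Lemma iter_neq i j : (i < j)%N -> (j < k)%N -> iter i f x <> iter j f x.
Proof.
move=> ij jk h.
have [_ [_ per]] := Per_iter i.
apply: (per (j - i)%N); first by rewrite subn_gt0.
  by apply: leq_ltn_trans jk; exact: leq_subr.
by rewrite -iterD subnK // ltnW.
Qed.
End Orbit.

Lemma in_bigsetU (T : Type) (F : nat -> set T) n y :
  (\big[setU/set0]_(i < n) F i) y <-> exists2 i, (i < n)%N & F i y.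
Proof.
elim: n => [|n IH]; first by rewrite big_ord0; split => // -[].
rewrite big_ord_recr /=; split.
  case=> [/IH [i ilt Fi]|Fn]; [exists i => //; exact: ltnW | by exists n].
move=> [i]; rewrite ltnS leq_eqVlt => /orP[/eqP ->|ilt] Fi; [by right | left].
by apply/IH; exists i.
Qed.

Lemma muE (R : realType) (f : R -> R) (k : nat) (x : R)
  (hI : forall y, unitI y -> unitI (f y)) (k1 : (1 <= k)%N) (Px : Per f k x)
  (mu : probability R R) : msupport mu `<=` orbit_of f x ->
  forall S, measurable S -> mu S = (\sum_(j < k) mu (S `&` [set iter j f x]))%E.
Proof.
move=> supp S mS.
pose O' := \big[setU/set0]_(j < k) [set iter j f x].
have mO : measurable O' by apply: bigsetU_measurable => j _; exact: measurable_set1.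
rewrite (measureDI mu mS mO).
have -> : (mu : {content set R -> \bar R}) (S `\` O') = 0%E.
  apply: (@conc _ _ _ supp); first exact: measurableD.
  move=> y [Sy nO] [n _ hn]; apply: nO; rewrite /O'; apply: (proj2 (@in_bigsetU R (fun j => [set iter j f x]) k y)).
  exists (n %% k)%N; first by rewrite ltn_pmod.
  by rewrite -hn /= (@iter_mod _ _ _ _ Px).
rewrite add0e.
have -> : S `&` O' = \big[setU/set0]_(j < k) (S `&` [set iter j f x]).
  rewrite /O'; apply/seteqP; split => y.
    move=> [Sy /(proj1 (@in_bigsetU R (fun j => [set iter j f x]) k y)) [i ik hi]].
    by apply: (proj2 (@in_bigsetU R (fun j => S `&` [set iter j f x]) k y)); exists i.
  move=> /(proj1 (@in_bigsetU R (fun j => S `&` [set iter j f x]) k y)) [i ik [Sy hi]].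
  by split => //; apply: (proj2 (@in_bigsetU R (fun j => [set iter j f x]) k y)); exists i.
apply: (@measure_semi_additive_ord_I _ _ _ mu (fun j => S `&` [set iter j f x]) k).
- by move=> j _; apply: measurableI => //; exact: measurable_set1.
- move=> i j /= ik jk [y [[_ yi] [_ yj]]].
  case: (ltngtP i j) => // h; exfalso.
    by apply: (@iter_neq _ _ _ _ hI k1 Px _ _ h jk); rewrite /= in yi yj; rewrite -yi -yj.
  by apply: (@iter_neq _ _ _ _ hI k1 Px _ _ h ik); rewrite /= in yi yj; rewrite -yi -yj.
- by apply: bigsetU_measurable => j _; apply: measurableI => //; exact: measurable_set1.
Qed.


Theorem mainTheorem5 (R : realType) (f : R -> R) (k : nat) :
  {within unitI, continuous f} ->
  (forall y, unitI y -> unitI (f y)) ->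
  (1 <= k)%N ->
  cantor_set (Per f k) ->
  forall x : R, Per f k x ->
  forall eps : R, 0 < eps ->
  forall mu_x : probability R R,
    f_invariant f mu_x -> msupport mu_x `<=` orbit_of f x ->
  exists nu : probability R R,
    [/\ nonatomic nu, msupport nu `<=` Per f k & (prohorov mu_x nu < eps%:E)%E].
Proof.
move=> _ hI k1 cs x Px eps e0 mu _ supp.
set C := Per f k.
have [_ _ perf _] := cs.
have [clC lpC] := perf.
have hC : forall c, C c -> forall e, 0 < e -> exists c', C c' /\ c' != c /\ `|c' - c| < e.
  move=> c Cc e e0'.
  have : limit_point C c by rewrite lpC.
  move=> /(_ (ball c e) (nbhsx_ballx c e e0')) [y [yc Cy By]].
  exists y; split => //; split => //.
  by move: By; rewrite -ball_normE /ball_ /= distrC.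
set d := eps / 2.
have d0 : 0 < d by rewrite divr_gt0.
have d20 : 0 < d / 2 by rewrite divr_gt0.
pose xs j := iter j f x.
have Cxs j : C (xs j) by exact: (Per_iter _ _ _ _ hI k1 Px).
pose g j : measurableTypeR R -> R := gmap _ C (xs j) (d / 2).
have gmono j : {homo g j : a b / a <= b}.
  by move=> a b ab; apply: (gmap_mono _ _ _ _ hC (Cxs j) d20).
have mg j : measurable_fun setT (g j) :=
  measurable_realfun.nondecreasing_measurable measurableT (gmono j).
pose w j : {nonneg R} := NngNum (fine_ge0 (measure_ge0 mu [set xs j])).
have wE j : ((w j)%:num)%:E = mu [set xs j].
  exact: (fineK (fin_num_measure mu _ (measurable_set1 _))).
have gC j t : C (g j t) by exact: (gmap_C _ _ _ _ hC (Cxs j) d20).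
have gnear j t : `|g j t - xs j| <= d / 2 by exact: (gmap_near _ _ _ _ hC (Cxs j) d20).
have ginj j : forall t t', 0 <= t <= 1 -> 0 <= t' <= 1 -> g j t = g j t' -> t = t'.
  move=> t t' /andP[a b] /andP[c e] h.
  case: (ltgtP t t') => // lt; exfalso.
    by have := gmap_strict _ _ _ _ hC (Cxs j) d20 _ _ a lt e; rewrite -/(g j) h ltxx.
  by have := gmap_strict _ _ _ _ hC (Cxs j) d20 _ _ c lt b; rewrite -/(g j) h ltxx.
pose nu0' := nu0 _ k g mg w.
have nu0E B : nu0' B = (\sum_(j < k) ((w j)%:num%:E * mpushf _ _ (mg j) B))%E by [].
have nu0T : nu0' setT = 1%E.
  rewrite nu0E.
  under eq_bigr do rewrite mpush_all // mule1 wE.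
  rewrite -(probability_setT mu) (muE _ _ _ _ hI k1 Px mu supp _ measurableT).
  by apply: eq_bigr => j _; rewrite setTI.
pose nu := nuP _ k g mg w mu.
have nuE B : nu B = nu0' B.
  rewrite /nu /nuP /mnormalize.
  case: ifPn => [/orP[]/eqP h|_].
  - exfalso; change (nu0' setT = 0%E) in h; rewrite nu0T in h.
    by case: h => /eqP; rewrite oner_eq0.
  - by exfalso; change (nu0' setT = +oo%E) in h; rewrite nu0T in h.
  change ((nu0' B * (fine (nu0' setT))^-1%:E)%E = nu0' B).
  by rewrite nu0T /= invr1 mule1.
have cE := (closure_id C).1 clC.
have xsI j : unitI (xs j) by exact: (iter_unitI _ _ _ _ hI Px).
exists nu; split.
- move=> y; change (nu [set y] = 0%E).
  rewrite nuE nu0E big1 // => j _.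
  rewrite mpush_set1 ?mule0 //; exact: ginj.
- move=> y hy; rewrite cE => B /nbhs_ballP [e /= e0' sub].
  apply: contrapT => hne.
  have : (0 < nu (ball y e))%E := hy e e0'.
  rewrite nuE nu0E big1 ?ltxx // => j _.
  rewrite mpush_none ?mule0 // => t bt; apply: hne; exists (g j t); split.
    exact: gC.
  exact: sub.
- apply: (@le_lt_trans _ _ d%:E); last by rewrite lte_fin /d; lra.
  apply: ereal_inf_le; exists d%:E => //; exists d => //; split => //.
  move=> A mA AI.
  change ((mu A <= nu (Bnbhd A d) + d%:E)%E /\ (nu A <= mu (Bnbhd A d) + d%:E)%E).
  have mBn : measurable (Bnbhd A d).
    have -> : Bnbhd A d = `[0, 1] `&` \bigcup_(a in A) ball a d.
      apply/seteqP; split => y /=.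
        move=> [yI [a Aa ya]]; split => //; exists a => //.
        by rewrite -ball_normE /ball_ /= distrC.
      move=> [yI [a Aa ya]]; split => //; exists a => //.
      by move: ya; rewrite -ball_normE /ball_ /= distrC.
    apply: measurableI => //; apply: measurable_realfun.open_measurable.
    by apply: bigcup_open => a _; exact: ball_open.
  split.
  + rewrite nuE (muE _ _ _ _ hI k1 Px mu supp _ mA) nu0E.
    apply: le_trans (leeDl _ _); last by rewrite lee_fin ltW.
    apply: lee_sum => j _.
    case: (pselect (A (xs j))) => Axj.
      rewrite mpush_all ?mule1; last first.
        move=> t; split; first by have [] := gC j t.
        by exists (xs j) => //; have := gnear j t; lra.
      rewrite wE; apply: le_measure; rewrite ?inE.
      - by apply: measurableI => //; exact: measurable_set1.
      - exact: measurable_set1.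
      - by move=> y [].
    have -> : A `&` [set xs j] = set0 by apply/seteqP; split => // y [Ay yx]; rewrite /= yx in Ay.
    by rewrite measure0 mule_ge0.
  + rewrite nuE (muE _ _ _ _ hI k1 Px mu supp _ mBn) nu0E.
    apply: le_trans (leeDl _ _); last by rewrite lee_fin ltW.
    apply: lee_sum => j _.
    case: (pselect (Bnbhd A d (xs j))) => Bxj.
      apply: (@le_trans _ _ ((w j)%:num%:E * 1)%E).
        by apply: lee_wpmul2l => //; exact: mpush_le1.
      rewrite mule1 wE.
      have -> : Bnbhd A d `&` [set xs j] = [set xs j] by apply/seteqP; split => [y [] //|y ->].
      by [].
    rewrite mpush_none ?mule0 ?measure_ge0 // => t At; apply: Bxj; split; first exact: xsI.
    by exists (g j t) => //; have := gnear j t; rewrite distrC; lra.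
Qed.
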